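(* Let $X$ be a semigroup. Every idempotent $e\in I\!Z(X)$ is viable.
   Context: $Z(X)=\{z\in X:\forall x\in X\ (xz=zx)\}$, $I\!Z(X)=\{z\in Z(X):zX\subseteq Z(X)\}$. For an idempotent $e$, $H_e$ is the maximal subgroup of $X$ containing $e$; $e$ is viable if $X\setminus\{x\in X: xe=ex\in H_e\}$ is an ideal in $X$ (a set $I$ with $IX\cup XI\subseteq I$). *)

(* Defs.v *)
Definition center {T : Type} (op : T -> T -> T) (z : T) : Prop :=
  forall x : T, op x z = op z x.

Definition ideal_center {T : Type} (op : T -> T -> T) (z : T) : Prop :=
  center op z /\ forall x : T, center op (op z x).

Definition idempotent {T : Type} (op : T -> T -> T) (e : T) : Prop :=
  op e e = e.

Definition is_subgroup {T : Type} (op : T -> T -> T) (G : T -> Prop) : Prop :=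
  (forall x y, G x -> G y -> G (op x y)) /\
  exists u, G u /\
    (forall x, G x -> op u x = x /\ op x u = x) /\
    (forall x, G x -> exists y, G y /\ op x y = u /\ op y x = u).

Definition maxsubgroup {T : Type} (op : T -> T -> T) (e : T) (x : T) : Prop :=
  exists G : T -> Prop, is_subgroup op G /\ G e /\ G x.

Definition is_ideal {T : Type} (op : T -> T -> T) (I : T -> Prop) : Prop :=
  forall x y, I x -> I (op x y) /\ I (op y x).

Definition viable {T : Type} (op : T -> T -> T) (e : T) : Prop :=
  is_ideal op (fun x => ~ (op x e = op e x /\ maxsubgroup op e (op x e))).

(* Main.v *)
Require Import Defs.

Section S.
Variable (T : Type) (op : T -> T -> T)
  (assoc : forall x y z : T, op x (op y z) = op (op x y) z)
  (e : T) (he : op e e = e) (hc : center op e) (hi : forall x, center op (op e x)).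

Definition Gp (z : T) : Prop :=
  op e z = z /\ op z e = z /\ exists w, op e w = w /\ op w e = w /\ op z w = e /\ op w z = e.

Lemma Gp_sub : is_subgroup op Gp.
Proof.
  split.
  - intros a c [h1 [h2 [w1 [k1 [k2 [k3 k4]]]]]] [g1 [g2 [w2 [l1 [l2 [l3 l4]]]]]].
    split; [rewrite assoc, h1; reflexivity|].
    split; [rewrite <- assoc, g2; reflexivity|].
    exists (op w2 w1). split; [rewrite assoc, l1; reflexivity|].
    split; [rewrite <- assoc, k2; reflexivity|].
    split.
    + rewrite <- assoc. rewrite (assoc c w2 w1), l3, (assoc a e w1), h2. exact k3.
    + rewrite <- assoc. rewrite (assoc w1 a c), k4, (assoc w2 e c), l2. exact l4.
  - exists e. split.
    + split; [exact he|]. split; [exact he|]. exists e. tauto.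
    + split.
      * intros a [h1 [h2 _]]. tauto.
      * intros a [h1 [h2 [w [k1 [k2 [k3 k4]]]]]]. exists w. split.
        { split; [exact k1|]. split; [exact k2|]. exists a. tauto. }
        tauto.
Qed.

Lemma inv_of (a : T) : maxsubgroup op e a ->
  exists b, op a b = e /\ op b a = e /\ op b e = b /\ op e b = b.
Proof.
  intros [G [[hcl [u [hu [hid hinv]]]] [Ge Ga]]].
  assert (ue : u = e).
  { destruct (hinv e Ge) as [e' [He' [_ h2]]].
    destruct (hid e Ge) as [h3 _].
    rewrite <- h3, <- h2, <- assoc, he. reflexivity. }
  subst u.
  destruct (hinv a Ga) as [b [Hb [h1 h2]]].
  exists b. destruct (hid b Hb). tauto.
Qed.

Lemma key (x z : T) : maxsubgroup op e (op (op x z) e) -> maxsubgroup op e (op x e).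
Proof.
  intros H. destruct (inv_of _ H) as [b [hab [hba [hbe heb]]]].
  exists Gp. split; [exact Gp_sub|]. split.
  - split; [exact he|]. split; [exact he|]. exists e. tauto.
  - split; [rewrite assoc, <- hc, <- assoc, he; reflexivity|].
    split; [rewrite <- assoc, he; reflexivity|].
    exists (op (op e z) b).
    assert (hw1 : op (op x e) (op (op e z) b) = e).
    { rewrite !assoc. rewrite <- (assoc x e e), he. rewrite <- (assoc x e z), <- (hc z).
      rewrite (assoc x z e). exact hab. }
    split; [rewrite !assoc, he; reflexivity|].
    split; [rewrite <- assoc, hbe; reflexivity|].
    split; [exact hw1|].
    rewrite <- (assoc e z b). rewrite <- (hi (op z b) (op x e)). rewrite (assoc e z b). exact hw1.
Qed.

End S.

Theorem lemma2p5 (T : Type) (op : T -> T -> T)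
  (assoc : forall x y z : T, op x (op y z) = op (op x y) z)
  (e : T) (he : idempotent op e) (hIZ : ideal_center op e) :
  viable op e.
Proof.
  destruct hIZ as [hc hi]. unfold viable, is_ideal.
  intros x y Hx. split.
  - intros [_ H]. apply Hx. split; [exact (hc x)|].
    exact (key T op assoc e he hc hi x y H).
  - intros [_ H]. apply Hx. split; [exact (hc x)|].
    assert (E : op (op y x) e = op (op x y) e).
    { rewrite (hc (op y x)), assoc, <- (hi y x), <- (hc y), assoc. reflexivity. }
    rewrite E in H.
    exact (key T op assoc e he hc hi x y H).
Qed.
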